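(* $\mathcal{M}_{3,3}\subseteq\overline{\operatorname{RBM}_{3,2}}$, the topological closure of $\operatorname{RBM}_{3,2}$ in $\Delta_7$.
   Context: A distribution of three binary random variables is a $2\times2\times2$ tensor $p=(p_{ijk})_{i,j,k\in\{0,1\}}$ with nonnegative entries summing to $1$; the set of these is the simplex $\Delta_7$. For $a,b,c\in\mathbb{R}^2_{\ge0}$, $a\otimes b\otimes c$ is the tensor with entries $a_ib_jc_k$. $\mathcal{M}_{3,3}$ is the set of $p\in\Delta_7$ that are a sum of three tensors of the form $a\otimes b\otimes c$ with $a,b,c\in\mathbb{R}^2_{\ge0}$. $\operatorname{RBM}_{3,2}$ is the set of $p\in\Delta_7$ of the form $p=(a_1\otimes b_1\otimes c_1+d_1\otimes e_1\otimes f_1)*(a_2\otimes b_2\otimes c_2+d_2\otimes e_2\otimes f_2)$ with all vectors in $\mathbb{R}^2_{\ge0}$, where $*$ is the entrywise (Hadamard) product. *)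

(* Defs.v *)
From Stdlib Require Import Reals.
Open Scope R_scope.

(* A 2x2x2 tensor, indices in {0,1} represented by bool (false = 0, true = 1). *)
Definition tensor := bool -> bool -> bool -> R.
Definition vec2 := bool -> R.

Definition nonneg2 (a : vec2) : Prop := forall i, 0 <= a i.

Definition sumb (f : bool -> R) : R := f false + f true.

Definition outer3 (a b c : vec2) : tensor := fun i j k => a i * b j * c k.

Definition tadd (p q : tensor) : tensor := fun i j k => p i j k + q i j k.
Definition hadamard (p q : tensor) : tensor := fun i j k => p i j k * q i j k.

Definition in_simplex (p : tensor) : Prop :=
  (forall i j k, 0 <= p i j k) /\
  sumb (fun i => sumb (fun j => sumb (fun k => p i j k))) = 1.

Definition M33 (p : tensor) : Prop :=
  in_simplex p /\
  exists a1 b1 c1 a2 b2 c2 a3 b3 c3 : vec2,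
    nonneg2 a1 /\ nonneg2 b1 /\ nonneg2 c1 /\
    nonneg2 a2 /\ nonneg2 b2 /\ nonneg2 c2 /\
    nonneg2 a3 /\ nonneg2 b3 /\ nonneg2 c3 /\
    p = tadd (tadd (outer3 a1 b1 c1) (outer3 a2 b2 c2)) (outer3 a3 b3 c3).

Definition RBM32 (p : tensor) : Prop :=
  in_simplex p /\
  exists a1 b1 c1 d1 e1 f1 a2 b2 c2 d2 e2 f2 : vec2,
    nonneg2 a1 /\ nonneg2 b1 /\ nonneg2 c1 /\
    nonneg2 d1 /\ nonneg2 e1 /\ nonneg2 f1 /\
    nonneg2 a2 /\ nonneg2 b2 /\ nonneg2 c2 /\
    nonneg2 d2 /\ nonneg2 e2 /\ nonneg2 f2 /\
    p = hadamard (tadd (outer3 a1 b1 c1) (outer3 d1 e1 f1))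
                 (tadd (outer3 a2 b2 c2) (outer3 d2 e2 f2)).

(* p lies in the topological closure of S (with respect to the Euclidean
   topology on R^8, expressed with the equivalent sup-norm). *)
Definition in_closure (S : tensor -> Prop) (p : tensor) : Prop :=
  forall eps, 0 < eps ->
    exists q, S q /\ forall i j k, Rabs (p i j k - q i j k) < eps.

(* Main.v *)
Require Import Defs.
From Stdlib Require Import Reals Lra Lia Psatz FunctionalExtensionality.
Open Scope R_scope.

Definition pw (b:bool) (x:R) := if b then x else 1.
Definition tof (k1 x1 y1 z1 k2 x2 y2 z2 k3 x3 y3 z3 : R) : tensor := fun i j l =>
  k1*pw i x1*pw j y1*pw l z1 + k2*pw i x2*pw j y2*pw l z2 + k3*pw i x3*pw j y3*pw l z3.
Definition detx (P:tensor) i := P i false false * P i true true - P i false true * P i true false.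
Definition dety (P:tensor) j := P false j false * P true j true - P false j true * P true j false.
Definition detz (P:tensor) l := P false false l * P true true l - P false true l * P true false l.
Definition Good P := 0 <= detx P false * detx P true \/ 0 <= dety P false * dety P true \/
   0 <= detz P false * detz P true.

Lemma test (a b c d: R) : 0 <= a*b + c*d -> 0 <= c*d + b*a.
Proof. intros. lra. Qed.

Section CF.
Variables k1 x1 y1 z1 k2 x2 y2 z2 k3 x3 y3 z3 : R.
Let P := tof k1 x1 y1 z1 k2 x2 y2 z2 k3 x3 y3 z3.
Lemma detx_tof i : detx P i =
  k1*k2*(pw i x1*pw i x2)*((y2-y1)*(z2-z1)) + k1*k3*(pw i x1*pw i x3)*((y3-y1)*(z3-z1))
  + k2*k3*(pw i x2*pw i x3)*((y3-y2)*(z3-z2)).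
Proof. unfold P, detx, tof; destruct i; simpl; ring. Qed.
Lemma dety_tof j : dety P j =
  k1*k2*(pw j y1*pw j y2)*((x2-x1)*(z2-z1)) + k1*k3*(pw j y1*pw j y3)*((x3-x1)*(z3-z1))
  + k2*k3*(pw j y2*pw j y3)*((x3-x2)*(z3-z2)).
Proof. unfold P, dety, tof; destruct j; simpl; ring. Qed.
Lemma detz_tof l : detz P l =
  k1*k2*(pw l z1*pw l z2)*((x2-x1)*(y2-y1)) + k1*k3*(pw l z1*pw l z3)*((x3-x1)*(y3-y1))
  + k2*k3*(pw l z2*pw l z3)*((x3-x2)*(y3-y2)).
Proof. unfold P, detz, tof; destruct l; simpl; ring. Qed.
End CF.

Lemma pw_pos b x : 0 < x -> 0 < pw b x.
Proof. destruct b; simpl; lra. Qed.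

Lemma sum3_nonneg a1 a2 a3 b1 b2 b3 c1 c2 c3 d1 d2 d3 :
  0 <= a1 -> 0 <= b1 -> 0 <= c1 -> 0 <= d1 ->
  0 <= a2 -> 0 <= b2 -> 0 <= c2 -> 0 <= d2 ->
  0 <= a3 -> 0 <= b3 -> 0 <= c3 -> 0 <= d3 ->
  0 <= a1*b1*c1*d1 + a2*b2*c2*d2 + a3*b3*c3*d3.
Proof. intros. repeat apply Rplus_le_le_0_compat; repeat apply Rmult_le_pos; auto. Qed.

Definition Hyp (k1 x1 y1 z1 k2 x2 y2 z2 k3 x3 y3 z3 : R) :=
  0 <= k1 /\ 0 <= k2 /\ 0 <= k3 /\ 0 < x1 /\ 0 < x2 /\ 0 < x3 /\
  0 < y1 /\ 0 < y2 /\ 0 < y3 /\ 0 < z1 /\ 0 < z2 /\ 0 < z3.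

Ltac hypd H := destruct H as (hk1&hk2&hk3&hx1&hx2&hx3&hy1&hy2&hy3&hz1&hz2&hz3).

Lemma prod_nonneg2 a b : 0 <= a -> 0 <= b -> 0 <= a*b.
Proof. intros; apply Rmult_le_pos; auto. Qed.
Lemma prod_nonpos2 a b : a <= 0 -> b <= 0 -> 0 <= a*b.
Proof. intros; nra. Qed.

(* case: z works since x,y same order *)
Lemma caseA k1 x1 y1 z1 k2 x2 y2 z2 k3 x3 y3 z3 :
  Hyp k1 x1 y1 z1 k2 x2 y2 z2 k3 x3 y3 z3 -> x1 <= x2 <= x3 -> y1 <= y2 <= y3 ->
  Good (tof k1 x1 y1 z1 k2 x2 y2 z2 k3 x3 y3 z3).
Proof.
  intros H Hx Hy; hypd H. right; right.
  assert (forall l, 0 <= detz (tof k1 x1 y1 z1 k2 x2 y2 z2 k3 x3 y3 z3) l).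
  { intro l; rewrite detz_tof.
    pose proof (pw_pos l z1 hz1); pose proof (pw_pos l z2 hz2); pose proof (pw_pos l z3 hz3).
    apply sum3_nonneg; try apply prod_nonneg2; try apply Rmult_le_pos; try lra. }
  apply Rmult_le_pos; auto.
Qed.

Ltac allnn := repeat (apply Rmult_le_pos || apply Rplus_le_le_0_compat).

Lemma detx_nn k1 x1 y1 z1 k2 x2 y2 z2 k3 x3 y3 z3 i :
  Hyp k1 x1 y1 z1 k2 x2 y2 z2 k3 x3 y3 z3 ->
  0 <= (y2-y1)*(z2-z1) -> 0 <= (y3-y1)*(z3-z1) -> 0 <= (y3-y2)*(z3-z2) ->
  0 <= detx (tof k1 x1 y1 z1 k2 x2 y2 z2 k3 x3 y3 z3) i.
Proof.
  intros H a b c; hypd H. rewrite detx_tof.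
  pose proof (pw_pos i x1 hx1); pose proof (pw_pos i x2 hx2); pose proof (pw_pos i x3 hx3).
  apply sum3_nonneg; try assumption; try lra; apply Rmult_le_pos; lra.
Qed.

Ltac works_x := unfold Good; left; apply Rmult_le_pos; apply detx_nn; try assumption; first [apply prod_nonneg2; lra | apply prod_nonpos2; lra].


Lemma caseB k1 x1 y1 z1 k2 x2 y2 z2 k3 x3 y3 z3 :
  Hyp k1 x1 y1 z1 k2 x2 y2 z2 k3 x3 y3 z3 -> x1 <= x2 <= x3 -> z1 <= z2 <= z3 ->
  Good (tof k1 x1 y1 z1 k2 x2 y2 z2 k3 x3 y3 z3).
Proof.
  intros H Hx Hz; hypd H. right; left.
  assert (forall l, 0 <= dety (tof k1 x1 y1 z1 k2 x2 y2 z2 k3 x3 y3 z3) l).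
  { intro l; rewrite dety_tof.
    pose proof (pw_pos l y1 hy1); pose proof (pw_pos l y2 hy2); pose proof (pw_pos l y3 hy3).
    apply sum3_nonneg; try apply prod_nonneg2; try apply Rmult_le_pos; try lra. }
  apply Rmult_le_pos; auto.
Qed.

Lemma caseC k1 x1 y1 z1 k2 x2 y2 z2 k3 x3 y3 z3 :
  Hyp k1 x1 y1 z1 k2 x2 y2 z2 k3 x3 y3 z3 -> y2 <= y1 <= y3 -> z2 <= z1 <= z3 ->
  Good (tof k1 x1 y1 z1 k2 x2 y2 z2 k3 x3 y3 z3).
Proof. intros H Hy Hz. unfold Good. left. apply Rmult_le_pos; apply detx_nn; try assumption; first [apply prod_nonneg2; lra | apply prod_nonpos2; lra]. Qed.

Lemma caseD k1 x1 y1 z1 k2 x2 y2 z2 k3 x3 y3 z3 :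
  Hyp k1 x1 y1 z1 k2 x2 y2 z2 k3 x3 y3 z3 -> y1 <= y3 <= y2 -> z1 <= z3 <= z2 ->
  Good (tof k1 x1 y1 z1 k2 x2 y2 z2 k3 x3 y3 z3).
Proof. intros H Hy Hz. works_x. Qed.

Lemma caseE k1 x1 y1 z1 k2 x2 y2 z2 k3 x3 y3 z3 :
  Hyp k1 x1 y1 z1 k2 x2 y2 z2 k3 x3 y3 z3 -> x1 <= x2 <= x3 -> y1 <= y3 <= y2 -> z2 <= z1 <= z3 ->
  Good (tof k1 x1 y1 z1 k2 x2 y2 z2 k3 x3 y3 z3).
Proof.
  intros H Hx Hy Hz. pose proof H as H0. hypd H0.
  set (P := tof k1 x1 y1 z1 k2 x2 y2 z2 k3 x3 y3 z3).
  destruct (Req_dec y3 y2) as [E|NE].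
  { unfold Good; right; right.
    assert (forall l, 0 <= detz P l).
    { intro l; unfold P; rewrite detz_tof.
      pose proof (pw_pos l z1 hz1); pose proof (pw_pos l z2 hz2); pose proof (pw_pos l z3 hz3).
      apply sum3_nonneg; try assumption; try lra; try (apply Rmult_le_pos; lra). }

    apply Rmult_le_pos; auto. }
  assert (Hy' : y3 < y2) by lra.
  assert (cert : forall j l, 0 <= (pw l z1*pw l z2)*(y2-y1) * dety P j + (pw j y1*pw j y2)*(z1-z2)*detz P l).
  { intros j l. unfold P; rewrite dety_tof, detz_tof.
    set (A := pw j y1*pw j y2). set (B := pw l z1*pw l z2). set (C := pw j y2*pw j y3).
    set (D := pw l z2*pw l z3). set (Y13 := pw j y1 * pw j y3). set (Z13 := pw l z1 * pw l z3).
    assert (hA: 0 < A) by (unfold A; destruct j; simpl; nra).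
    assert (hB: 0 < B) by (unfold B; destruct l; simpl; nra).
    assert (hC: 0 < C) by (unfold C; destruct j; simpl; nra).
    assert (hD: 0 < D) by (unfold D; destruct l; simpl; nra).
    assert (h13: 0 < Y13) by (unfold Y13; destruct j; simpl; nra).
    assert (g13: 0 < Z13) by (unfold Z13; destruct l; simpl; nra).
    assert (i1 : A*(y2-y3) <= C*(y2-y1)) by (unfold A, C; destruct j; simpl; nra).
    assert (i2 : D*(z1-z2) <= B*(z3-z2)) by (unfold B, D; destruct l; simpl; nra).
    clearbody A B C D Y13 Z13.
    assert (E23 : 0 <= B*(y2-y1)*C*(z3-z2) - A*(z1-z2)*D*(y2-y3)).
    { assert (0 <= A*(y2-y3)) by nra. assert (0 <= D*(z1-z2)) by nra.
      assert ((A*(y2-y3))*(D*(z1-z2)) <= (C*(y2-y1))*(B*(z3-z2))).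
      { apply Rmult_le_compat; auto. }
      nra. }
    assert (E13 : 0 <= B*(y2-y1)*Y13*(z3-z1) + A*(z1-z2)*Z13*(y3-y1)).
    { apply Rplus_le_le_0_compat; repeat apply Rmult_le_pos; lra. }
    assert (Eq : B * (y2 - y1) *
   (k1 * k2 * A * ((x2 - x1) * (z2 - z1)) + k1 * k3 * Y13 * ((x3 - x1) * (z3 - z1)) +
    k2 * k3 * C * ((x3 - x2) * (z3 - z2))) +
   A * (z1 - z2) *
   (k1 * k2 * B * ((x2 - x1) * (y2 - y1)) + k1 * k3 * Z13 * ((x3 - x1) * (y3 - y1)) +
    k2 * k3 * D * ((x3 - x2) * (y3 - y2))) =
   k1*k3*(x3-x1)*(B*(y2-y1)*Y13*(z3-z1) + A*(z1-z2)*Z13*(y3-y1)) +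
   k2*k3*(x3-x2)*(B*(y2-y1)*C*(z3-z2) - A*(z1-z2)*D*(y2-y3))) by ring.
    rewrite Eq. apply Rplus_le_le_0_compat; apply Rmult_le_pos; try apply Rmult_le_pos; try apply Rmult_le_pos; lra. }
  unfold Good. right.
  destruct (Rle_dec 0 (dety P false * dety P true)) as [G1|G1]; [left; exact G1|].
  destruct (Rle_dec 0 (detz P false * detz P true)) as [G2|G2]; [right; exact G2|].
  exfalso.
  assert (exists j, dety P j < 0) as [j Hj].
  { destruct (Rle_dec 0 (dety P false)); [exists true | exists false]; nra. }
  assert (exists l, detz P l < 0) as [l Hl].
  { destruct (Rle_dec 0 (detz P false)); [exists true | exists false]; nra. }
  specialize (cert j l).
  assert (0 < pw l z1*pw l z2) by (destruct l; simpl; nra).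
  assert (0 < pw l z1*pw l z2*(y2-y1)) by (apply Rmult_lt_0_compat; lra).
  assert (0 < pw j y1*pw j y2) by (destruct j; simpl; nra).
  assert (0 <= pw j y1*pw j y2*(z1-z2)) by (apply Rmult_le_pos; lra).
  nra.
Qed.

Definition flipy (P:tensor) : tensor := fun i j l => P i (negb j) l.
Definition flipz (P:tensor) : tensor := fun i j l => P i j (negb l).
Definition syz (P:tensor) : tensor := fun i j l => P i l j.

Lemma Good_flipy P : Good (flipy P) -> Good P.
Proof.
  unfold Good, flipy, detx, dety, detz; simpl.
  intros [H|[H|H]]; [left|right;left|right;right]; lra.
Qed.
Lemma Good_flipz P : Good (flipz P) -> Good P.
Proof.
  unfold Good, flipz, detx, dety, detz; simpl.
  intros [H|[H|H]]; [left|right;left|right;right]; lra.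
Qed.
Lemma Good_syz P : Good (syz P) -> Good P.
Proof.
  unfold Good, syz, detx, dety, detz; simpl.
  intros [H|[H|H]]; [left|right;right|right;left]; lra.
Qed.

Ltac text := apply functional_extensionality; intro; apply functional_extensionality; intro;
  apply functional_extensionality; intro.

Lemma tof_flipy k1 x1 y1 z1 k2 x2 y2 z2 k3 x3 y3 z3 : y1 <> 0 -> y2 <> 0 -> y3 <> 0 ->
  tof (k1*y1) x1 (/y1) z1 (k2*y2) x2 (/y2) z2 (k3*y3) x3 (/y3) z3 =
  flipy (tof k1 x1 y1 z1 k2 x2 y2 z2 k3 x3 y3 z3).
Proof. intros. text. unfold tof, flipy. match goal with |- context [pw (negb ?j) _] => destruct j end;
  simpl; field; auto. Qed.
Lemma tof_flipz k1 x1 y1 z1 k2 x2 y2 z2 k3 x3 y3 z3 : z1 <> 0 -> z2 <> 0 -> z3 <> 0 ->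
  tof (k1*z1) x1 y1 (/z1) (k2*z2) x2 y2 (/z2) (k3*z3) x3 y3 (/z3) =
  flipz (tof k1 x1 y1 z1 k2 x2 y2 z2 k3 x3 y3 z3).
Proof. intros. text. unfold tof, flipz. match goal with |- context [pw (negb ?j) _] => destruct j end;
  simpl; field; auto. Qed.
Lemma tof_syz k1 x1 y1 z1 k2 x2 y2 z2 k3 x3 y3 z3 :
  tof k1 x1 z1 y1 k2 x2 z2 y2 k3 x3 z3 y3 = syz (tof k1 x1 y1 z1 k2 x2 y2 z2 k3 x3 y3 z3).
Proof. text. unfold tof, syz. ring. Qed.

Definition canon (y1 y2 y3 : R) := (y1 <= y2 <= y3) \/ (y2 <= y1 <= y3) \/ (y1 <= y3 <= y2).

Lemma canon_or y1 y2 y3 : 0 < y1 -> 0 < y2 -> 0 < y3 -> canon y1 y2 y3 \/ canon (/y1) (/y2) (/y3).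
Proof.
  intros h1 h2 h3. unfold canon.
  assert (forall a b, 0 < a -> 0 < b -> a <= b -> /b <= /a) as inv.
  { intros. apply Rinv_le_contravar; auto. }
  destruct (Rle_dec y1 y2); destruct (Rle_dec y2 y3); destruct (Rle_dec y1 y3).
  all: first [ left; lra | right; 
    repeat match goal with |- _ \/ _ => first [left; split; apply inv; lra | right] end;
    split; apply inv; lra ].
Qed.

Lemma good_c k1 x1 y1 z1 k2 x2 y2 z2 k3 x3 y3 z3 :
  Hyp k1 x1 y1 z1 k2 x2 y2 z2 k3 x3 y3 z3 -> x1 <= x2 <= x3 -> canon y1 y2 y3 -> canon z1 z2 z3 ->
  Good (tof k1 x1 y1 z1 k2 x2 y2 z2 k3 x3 y3 z3).
Proof.
  intros H Hx Hy Hz.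
  destruct Hy as [Hy|[Hy|Hy]]; [apply caseA; auto|..];
  (destruct Hz as [Hz|[Hz|Hz]]; [apply caseB; auto|..]).
  - apply caseC; auto.
  - apply Good_syz. rewrite <- tof_syz. apply caseE; auto.
    unfold Hyp in *; tauto.
  - apply caseE; auto.
  - apply caseD; auto.
Qed.

Lemma hyp_flipy k1 x1 y1 z1 k2 x2 y2 z2 k3 x3 y3 z3 :
  Hyp k1 x1 y1 z1 k2 x2 y2 z2 k3 x3 y3 z3 ->
  Hyp (k1*y1) x1 (/y1) z1 (k2*y2) x2 (/y2) z2 (k3*y3) x3 (/y3) z3.
Proof. intro H; hypd H; repeat split; try apply Rmult_le_pos; try apply Rinv_0_lt_compat; lra. Qed.
Lemma hyp_flipz k1 x1 y1 z1 k2 x2 y2 z2 k3 x3 y3 z3 :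
  Hyp k1 x1 y1 z1 k2 x2 y2 z2 k3 x3 y3 z3 ->
  Hyp (k1*z1) x1 y1 (/z1) (k2*z2) x2 y2 (/z2) (k3*z3) x3 y3 (/z3).
Proof. intro H; hypd H; repeat split; try apply Rmult_le_pos; try apply Rinv_0_lt_compat; lra. Qed.

Lemma good_xs k1 x1 y1 z1 k2 x2 y2 z2 k3 x3 y3 z3 :
  Hyp k1 x1 y1 z1 k2 x2 y2 z2 k3 x3 y3 z3 -> x1 <= x2 <= x3 ->
  Good (tof k1 x1 y1 z1 k2 x2 y2 z2 k3 x3 y3 z3).
Proof.
  intros H Hx. pose proof H as H0; hypd H0.
  assert (Gz : forall k1 y1 k2 y2 k3 y3, Hyp k1 x1 y1 z1 k2 x2 y2 z2 k3 x3 y3 z3 ->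
     canon y1 y2 y3 -> Good (tof k1 x1 y1 z1 k2 x2 y2 z2 k3 x3 y3 z3)).
  { intros k1' y1' k2' y2' k3' y3' H' Hy.
    destruct (canon_or z1 z2 z3) as [Hz|Hz]; auto.
    - apply good_c; auto.
    - apply Good_flipz. rewrite <- tof_flipz by lra. apply good_c; auto.
      apply hyp_flipz; auto. }
  destruct (canon_or y1 y2 y3) as [Hy|Hy]; auto.
  apply Good_flipy. rewrite <- tof_flipy by lra. apply Gz; auto.
  apply hyp_flipy; auto.
Qed.

Lemma good_all k1 x1 y1 z1 k2 x2 y2 z2 k3 x3 y3 z3 :
  Hyp k1 x1 y1 z1 k2 x2 y2 z2 k3 x3 y3 z3 ->
  Good (tof k1 x1 y1 z1 k2 x2 y2 z2 k3 x3 y3 z3).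
Proof.
  intros H. pose proof H as H0; hypd H0.
  destruct (Rle_dec x1 x2); destruct (Rle_dec x2 x3); destruct (Rle_dec x1 x3).
  all: first
   [ apply good_xs; [auto|lra]
   | replace (tof k1 x1 y1 z1 k2 x2 y2 z2 k3 x3 y3 z3) with (tof k1 x1 y1 z1 k3 x3 y3 z3 k2 x2 y2 z2)
       by (text; unfold tof; ring); apply good_xs; [unfold Hyp in *; tauto|lra]
   | replace (tof k1 x1 y1 z1 k2 x2 y2 z2 k3 x3 y3 z3) with (tof k2 x2 y2 z2 k1 x1 y1 z1 k3 x3 y3 z3)
       by (text; unfold tof; ring); apply good_xs; [unfold Hyp in *; tauto|lra]
   | replace (tof k1 x1 y1 z1 k2 x2 y2 z2 k3 x3 y3 z3) with (tof k2 x2 y2 z2 k3 x3 y3 z3 k1 x1 y1 z1)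
       by (text; unfold tof; ring); apply good_xs; [unfold Hyp in *; tauto|lra]
   | replace (tof k1 x1 y1 z1 k2 x2 y2 z2 k3 x3 y3 z3) with (tof k3 x3 y3 z3 k1 x1 y1 z1 k2 x2 y2 z2)
       by (text; unfold tof; ring); apply good_xs; [unfold Hyp in *; tauto|lra]
   | replace (tof k1 x1 y1 z1 k2 x2 y2 z2 k3 x3 y3 z3) with (tof k3 x3 y3 z3 k2 x2 y2 z2 k1 x1 y1 z1)
       by (text; unfold tof; ring); apply good_xs; [unfold Hyp in *; tauto|lra] ].
Qed.

Definition e0 : vec2 := fun i => if i then 0 else 1.
Definition e1 : vec2 := fun i => if i then 1 else 0.
Definition mk2 (a b : R) : vec2 := fun i => if i then b else a.

Lemma rank1 n00 n01 n10 n11 : 0 <= n00 -> 0 <= n01 -> 0 <= n10 -> 0 <= n11 ->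
  n00 * n11 = n01 * n10 ->
  exists b c : vec2, nonneg2 b /\ nonneg2 c /\
    n00 = b false * c false /\ n01 = b false * c true /\ n10 = b true * c false /\ n11 = b true * c true.
Proof.
  intros h1 h2 h3 h4 E.
  destruct (Rlt_le_dec 0 n00) as [p|p].
  - exists (mk2 1 (n10/n00)), (mk2 n00 n01). unfold nonneg2, mk2.
    split; [intros [|]; [unfold Rdiv; apply Rmult_le_pos; [lra|left; apply Rinv_0_lt_compat; lra]| lra]|].
    split; [intros [|]; lra|].
    split; [ring|]. split; [ring|]. split; [field; lra|].
    apply (Rmult_eq_reg_l n00); [|lra]. field_simplify; lra.
  - assert (n00 = 0) by lra. subst.
    assert (n01 = 0 \/ n10 = 0) as [z|z] by nra; subst.
    + exists (mk2 0 1), (mk2 n10 n11). unfold nonneg2, mk2; repeat split;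
        try (intros [|]; lra); simpl; ring.
    + exists (mk2 n01 n11), (mk2 0 1). unfold nonneg2, mk2; repeat split;
        try (intros [|]; lra); simpl; ring.
Qed.

Lemma slice_pos m00 m01 m10 m11 : 0 <= m00 -> 0 <= m01 -> 0 <= m10 -> 0 <= m11 ->
  0 <= m00*m11 - m01*m10 -> exists s, 0 <= s <= m00 /\ (m00 - s)*m11 = m01*m10.
Proof.
  intros. destruct (Rlt_le_dec 0 m11).
  - exists ((m00*m11 - m01*m10)/m11). split; [split|].
    + unfold Rdiv; apply Rmult_le_pos; [lra|left; apply Rinv_0_lt_compat; lra].
    + apply (Rmult_le_reg_r m11); auto. field_simplify; nra.
    + field. lra.
  - exists 0. assert (m11 = 0) by lra. subst. nra.
Qed.

Lemma slice_neg m00 m01 m10 m11 : 0 <= m00 -> 0 <= m01 -> 0 <= m10 -> 0 <= m11 ->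
  m00*m11 - m01*m10 <= 0 -> exists s, 0 <= s <= m01 /\ m00*m11 = (m01 - s)*m10.
Proof.
  intros. destruct (Rlt_le_dec 0 m10).
  - exists ((m01*m10 - m00*m11)/m10). split; [split|].
    + unfold Rdiv; apply Rmult_le_pos; [lra|left; apply Rinv_0_lt_compat; lra].
    + apply (Rmult_le_reg_r m10); auto. field_simplify; nra.
    + field. lra.
  - exists 0. assert (m10 = 0) by lra. subst. nra.
Qed.

Definition tnn (P:tensor) := forall i j l, 0 <= P i j l.

Definition Decx (P:tensor) (K:R) := exists u v w b c d f : vec2,
  nonneg2 u /\ nonneg2 v /\ nonneg2 w /\ nonneg2 b /\ nonneg2 c /\ nonneg2 d /\ nonneg2 f /\
  (forall i, u i <= K) /\ (forall j, v j <= K) /\ (forall l, w l <= K) /\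
  (forall j l, b j * c l <= K) /\ (forall j l, d j * f l <= K) /\
  P = tadd (tadd (outer3 u v w) (outer3 e0 b c)) (outer3 e1 d f).

Lemma decomp_x P K : tnn P -> (forall i j l, P i j l <= K) -> 1 <= K ->
  0 <= detx P false * detx P true -> Decx P K.
Proof.
  intros Hn HK K1 Hd.
  pose proof (Hn false false false). pose proof (Hn false false true).
  pose proof (Hn false true false). pose proof (Hn false true true).
  pose proof (Hn true false false). pose proof (Hn true false true).
  pose proof (Hn true true false). pose proof (Hn true true true).
  pose proof (HK false false false). pose proof (HK false false true).
  pose proof (HK false true false). pose proof (HK false true true).
  pose proof (HK true false false). pose proof (HK true false true).
  pose proof (HK true true false). pose proof (HK true true true).
  unfold detx in Hd.
  assert (Hs : (0 <= detx P false /\ 0 <= detx P true) \/ (detx P false <= 0 /\ detx P true <= 0)).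
  { unfold detx. destruct (Rle_dec 0 (P false false false * P false true true - P false false true * P false true false)); nra. }
  unfold detx in Hs.
  destruct Hs as [[G0 G1]|[G0 G1]].
  - destruct (slice_pos (P false false false) (P false false true) (P false true false) (P false true true) ltac:(assumption) ltac:(assumption) ltac:(assumption) ltac:(assumption) G0)
      as [s0 [Hs0 E0]].
    destruct (slice_pos (P true false false) (P true false true) (P true true false) (P true true true) ltac:(assumption) ltac:(assumption) ltac:(assumption) ltac:(assumption) G1)
      as [s1 [Hs1 E1]].
    destruct (rank1 (P false false false - s0) (P false false true) (P false true false) (P false true true))
      as (b&c&hb&hc&b00&b01&b10&b11); try lra.
    destruct (rank1 (P true false false - s1) (P true false true) (P true true false) (P true true true))
      as (d&f&hd&hf&d00&d01&d10&d11); try lra.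
    exists (mk2 s0 s1), e0, e0, b, c, d, f.
    unfold nonneg2, mk2, e0 in *.
    repeat split; auto; try (intros [|]; lra); try (intros [|] [|]; lra).
    text. unfold tadd, outer3, e1, e0, mk2. destruct x, x0, x1; lra.
  - destruct (slice_neg (P false false false) (P false false true) (P false true false) (P false true true) ltac:(assumption) ltac:(assumption) ltac:(assumption) ltac:(assumption) G0)
      as [s0 [Hs0 E0]].
    destruct (slice_neg (P true false false) (P true false true) (P true true false) (P true true true) ltac:(assumption) ltac:(assumption) ltac:(assumption) ltac:(assumption) G1)
      as [s1 [Hs1 E1]].
    destruct (rank1 (P false false false) (P false false true - s0) (P false true false) (P false true true))
      as (b&c&hb&hc&b00&b01&b10&b11); try lra.
    destruct (rank1 (P true false false) (P true false true - s1) (P true true false) (P true true true))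
      as (d&f&hd&hf&d00&d01&d10&d11); try lra.
    exists (mk2 s0 s1), e0, e1, b, c, d, f.
    unfold nonneg2, mk2, e0, e1 in *.
    repeat split; auto; try (intros [|]; lra); try (intros [|] [|]; lra).
    text. unfold tadd, outer3, e1, e0, mk2. destruct x, x0, x1; lra.
Qed.

Definition rbmf (r:tensor) := exists a1 b1 c1 d1 e1 f1 a2 b2 c2 d2 e2 f2 : vec2,
    nonneg2 a1 /\ nonneg2 b1 /\ nonneg2 c1 /\
    nonneg2 d1 /\ nonneg2 e1 /\ nonneg2 f1 /\
    nonneg2 a2 /\ nonneg2 b2 /\ nonneg2 c2 /\
    nonneg2 d2 /\ nonneg2 e2 /\ nonneg2 f2 /\
    r = hadamard (tadd (outer3 a1 b1 c1) (outer3 d1 e1 f1))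
                 (tadd (outer3 a2 b2 c2) (outer3 d2 e2 f2)).

Lemma cube_bound u v w K eta : 0 <= u <= K -> 0 <= v <= K -> 0 <= w <= K -> 0 < eta <= 1 ->
  0 <= (u+eta)*(v+eta)*(w+eta) - u*v*w <= eta*(3*K*K+3*K+1).
Proof.
  intros. assert ((u+eta)*(v+eta)*(w+eta) - u*v*w =
    eta*(u*v+u*w+v*w) + eta*eta*(u+v+w) + eta*eta*eta) as E by ring.
  rewrite E. assert (0 <= K) by lra.
  assert (u*v <= K*K) by (apply Rmult_le_compat; lra).
  assert (u*w <= K*K) by (apply Rmult_le_compat; lra).
  assert (v*w <= K*K) by (apply Rmult_le_compat; lra).
  assert (0 <= u*v) by nra. assert (0 <= u*w) by nra. assert (0 <= v*w) by nra.
  assert (eta*eta <= eta) by nra. assert (eta*eta*eta <= eta) by nra.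
  assert (0 <= eta*eta) by nra. assert (0<= eta*eta*eta) by nra.
  split. { nra. }
  assert (eta*(u*v+u*w+v*w) <= eta*(3*K*K)) by (apply Rmult_le_compat_l; lra).
  assert (eta*eta*(u+v+w) <= eta*(3*K)).
  { apply Rle_trans with (eta*(u+v+w)). apply Rmult_le_compat_r; lra. apply Rmult_le_compat_l; lra. }
  lra.
Qed.

Lemma frac_bound X Y a b eta K : 0 <= X <= K -> 0 <= Y <= K -> eta <= a -> eta <= b -> 0 < eta ->
  0 <= X * Y * / a * / b <= K*K / (eta*eta).
Proof.
  intros. assert (0 < a) by lra. assert (0 < b) by lra.
  assert (0 < /a) by (apply Rinv_0_lt_compat; lra). assert (0 < /b) by (apply Rinv_0_lt_compat; lra).
  assert (/a <= /eta) by (apply Rinv_le_contravar; lra).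
  assert (/b <= /eta) by (apply Rinv_le_contravar; lra).
  split. { repeat apply Rmult_le_pos; lra. }
  replace (K*K/(eta*eta)) with (K*K*/eta*/eta) by (field; lra).
  assert (X*Y <= K*K) by (apply Rmult_le_compat; lra).
  apply Rmult_le_compat; try (repeat apply Rmult_le_pos); try lra.
  apply Rmult_le_compat; try (repeat apply Rmult_le_pos); try lra.
Qed.

Lemma eps_le eta : 0 < eta <= 1 -> eta*eta*eta*eta <= eta.
Proof. intros. assert (eta*eta <= 1) by nra. assert (0 <= eta*eta) by nra.
  assert (eta*eta*eta <= 1) by nra. assert (0 <= eta*eta*eta) by nra. nra. Qed.

Lemma entry_false u0 vj wl bj cl dj fl K eta eps delta :
  0 <= u0 <= K -> 0 <= vj <= K -> 0 <= wl <= K -> 0 <= bj -> 0 <= cl -> 0 <= dj -> 0 <= fl ->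
  bj*cl <= K -> dj*fl <= K -> 0 < eta <= 1 -> eps = eta*eta*eta*eta -> eta*(12*K*K) <= delta -> 1 <= K ->
  u0*vj*wl + 1*bj*cl + 0*dj*fl <=
   (1*bj*cl + (u0+eta)*(vj+eta)*(wl+eta)) * (eps*(dj/(vj+eta))*(fl/(wl+eta)) + 1*1*1) <=
  u0*vj*wl + 1*bj*cl + 0*dj*fl + delta.
Proof.
  intros. 
  assert (E : (1*bj*cl + (u0+eta)*(vj+eta)*(wl+eta)) * (eps*(dj/(vj+eta))*(fl/(wl+eta)) + 1*1*1) =
     u0*vj*wl + 1*bj*cl + 0*dj*fl + (eps*((bj*cl)*(dj*fl)*/(vj+eta)*/(wl+eta)) + eps*((u0+eta)*(dj*fl))
       + ((u0+eta)*(vj+eta)*(wl+eta) - u0*vj*wl))) by (field; split; lra).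
  rewrite E. clear E.
  destruct (cube_bound u0 vj wl K eta) as [c1 c2]; auto.
  assert (FB: 0 <= bj*cl*(dj*fl)*/(vj+eta)*/(wl+eta) <= K*K/(eta*eta)).
  { apply frac_bound; try split; try lra; try (apply Rmult_le_pos; lra). }
  destruct FB as [f1 f2].
  assert (0 <= bj*cl) by (apply Rmult_le_pos; lra). assert (0 <= dj*fl) by (apply Rmult_le_pos; lra).
  assert (he : 0 < eps) by (subst; repeat apply Rmult_lt_0_compat; lra).
  assert (eps * (K*K/(eta*eta)) = eta*eta*(K*K)) by (subst; field; lra).
  assert (eps*((bj*cl)*(dj*fl)*/(vj+eta)*/(wl+eta)) <= eta*(K*K)).
  { apply Rle_trans with (eps * (K*K/(eta*eta))). apply Rmult_le_compat_l; lra.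
    assert (eta*eta*(K*K) <= eta*(K*K)). { apply Rmult_le_compat_r; nra. } lra. }
  assert (0 <= eps*((bj*cl)*(dj*fl)*/(vj+eta)*/(wl+eta))) by (apply Rmult_le_pos; lra).
  assert (eps <= eta) by (subst; apply eps_le; lra).
  assert ((u0+eta)*(dj*fl) <= (K+1)*K) by (apply Rmult_le_compat; lra).
  assert (0 <= (u0+eta)*(dj*fl)) by (apply Rmult_le_pos; lra).
  assert (eps*((u0+eta)*(dj*fl)) <= eta*((K+1)*K)) by (apply Rmult_le_compat; lra).
  assert (0 <= eps*((u0+eta)*(dj*fl))) by (apply Rmult_le_pos; lra).
  assert (eta*(K*K) + eta*((K+1)*K) + eta*(3*K*K+3*K+1) <= eta*(12*K*K)).
  { rewrite <- !Rmult_plus_distr_l. apply Rmult_le_compat_l; nra. }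
  split; lra.
Qed.

Lemma entry_true u1 vj wl bj cl dj fl K eta eps delta :
  0 <= u1 <= K -> 0 <= vj <= K -> 0 <= wl <= K -> 0 <= bj -> 0 <= cl -> 0 <= dj -> 0 <= fl ->
  bj*cl <= K -> dj*fl <= K -> 0 < eta <= 1 -> eps = eta*eta*eta*eta -> eta*(12*K*K) <= delta -> 1 <= K ->
  u1*vj*wl + 0*bj*cl + 1*dj*fl <=
   (eps*bj*cl + (u1+eta)*(vj+eta)*(wl+eta)) * (/(u1+eta)*(dj/(vj+eta))*(fl/(wl+eta)) + 1*1*1) <=
  u1*vj*wl + 0*bj*cl + 1*dj*fl + delta.
Proof.
  intros. 
  assert (E : (eps*bj*cl + (u1+eta)*(vj+eta)*(wl+eta)) * (/(u1+eta)*(dj/(vj+eta))*(fl/(wl+eta)) + 1*1*1) =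
     u1*vj*wl + 0*bj*cl + 1*dj*fl + (eps*/(u1+eta)*((bj*cl)*(dj*fl)*/(vj+eta)*/(wl+eta)) + eps*(bj*cl)
       + ((u1+eta)*(vj+eta)*(wl+eta) - u1*vj*wl))) by (field; repeat split; lra).
  rewrite E. clear E.
  destruct (cube_bound u1 vj wl K eta) as [c1 c2]; auto.
  assert (FB: 0 <= bj*cl*(dj*fl)*/(vj+eta)*/(wl+eta) <= K*K/(eta*eta)).
  { apply frac_bound; try split; try lra; try (apply Rmult_le_pos; lra). }
  destruct FB as [f1 f2].
  assert (0 <= bj*cl) by (apply Rmult_le_pos; lra). assert (0 <= dj*fl) by (apply Rmult_le_pos; lra).
  assert (he : 0 < eps) by (subst; repeat apply Rmult_lt_0_compat; lra).
  assert (0 < /(u1+eta)) by (apply Rinv_0_lt_compat; lra).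
  assert (/(u1+eta) <= /eta) by (apply Rinv_le_contravar; lra).
  assert (eps * /eta * (K*K/(eta*eta)) = eta*(K*K)) by (subst; field; lra).
  assert (eps*/(u1+eta)*((bj*cl)*(dj*fl)*/(vj+eta)*/(wl+eta)) <= eta*(K*K)).
  { assert (0 < /eta) by (apply Rinv_0_lt_compat; lra).
    apply Rle_trans with (eps * /eta * (K*K/(eta*eta))); [|lra].
    apply Rmult_le_compat; [apply Rmult_le_pos; lra | exact f1 | apply Rmult_le_compat_l; lra | exact f2]. }
  assert (0 <= eps*/(u1+eta)*((bj*cl)*(dj*fl)*/(vj+eta)*/(wl+eta))) by (apply Rmult_le_pos; [apply Rmult_le_pos; lra | exact f1]).
  assert (eps <= eta) by (subst; apply eps_le; lra).
  assert (eps*(bj*cl) <= eta*K) by (apply Rmult_le_compat; lra).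
  assert (0 <= eps*(bj*cl)) by (apply Rmult_le_pos; lra).
  assert (eta*(K*K) + eta*K + eta*(3*K*K+3*K+1) <= eta*(12*K*K)).
  { rewrite <- !Rmult_plus_distr_l. apply Rmult_le_compat_l; nra. }
  split; lra.
Qed.

Lemma approx_x P K delta : Decx P K -> 1 <= K -> 0 < delta ->
  exists r, rbmf r /\ forall i j l, P i j l <= r i j l <= P i j l + delta.
Proof.
  intros (u&v&w&b&c&d&f&hu&hv&hw&hb&hc&hd&hf&Ku&Kv&Kw&Kbc&Kdf&EP) K1 hdel.
  set (eta := delta/(12*K*K+delta)).
  assert (h12 : 0 < 12*K*K) by nra.
  assert (he : 0 < eta) by (unfold eta; apply Rdiv_lt_0_compat; lra).
  assert (he1 : eta <= 1).
  { unfold eta. apply (Rmult_le_reg_r (12*K*K+delta)); [lra|]. field_simplify; lra. }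
  assert (he2 : eta*(12*K*K) <= delta).
  { unfold eta. apply (Rmult_le_reg_r (12*K*K+delta)); [lra|]. field_simplify; try lra.
    nra. }
  clearbody eta. set (eps := eta*eta*eta*eta).
  assert (heps : 0 < eps) by (unfold eps; repeat apply Rmult_lt_0_compat; lra).
  exists (hadamard (tadd (outer3 (mk2 1 eps) b c)
                         (outer3 (fun i => u i + eta) (fun j => v j + eta) (fun l => w l + eta)))
                   (tadd (outer3 (mk2 eps (/(u true + eta))) (fun j => d j / (v j + eta)) (fun l => f l / (w l + eta)))
                         (outer3 (fun _ => 1) (fun _ => 1) (fun _ => 1)))).
  split.
  - unfold rbmf.
    exists (mk2 1 eps), b, c, (fun i => u i + eta), (fun j => v j + eta), (fun l => w l + eta),
      (mk2 eps (/(u true + eta))), (fun j => d j / (v j + eta)), (fun l => f l / (w l + eta)),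
      (fun _ => 1), (fun _ => 1), (fun _ => 1).
    unfold nonneg2 in *.
    split; [intros [|]; simpl; lra|].
    split; [auto|]. split; [auto|].
    split; [intros i; specialize (hu i); lra|].
    split; [intros i; specialize (hv i); lra|].
    split; [intros i; specialize (hw i); lra|].
    split; [intros [|]; simpl; [left; apply Rinv_0_lt_compat; specialize (hu true); lra | lra]|].
    split; [intros i; unfold Rdiv; apply Rmult_le_pos; [apply hd | left; apply Rinv_0_lt_compat; specialize (hv i); lra]|].
    split; [intros i; unfold Rdiv; apply Rmult_le_pos; [apply hf | left; apply Rinv_0_lt_compat; specialize (hw i); lra]|].
    split; [intros; lra|]. split; [intros; lra|]. split; [intros; lra|]. reflexivity.
  - intros i j l. subst P. unfold hadamard, tadd, outer3, e0, e1, mk2.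
    unfold nonneg2 in *.
    destruct i.
    + apply (entry_true (u true) (v j) (w l) (b j) (c l) (d j) (f l) K eta eps delta); auto;
        try split; auto; try lra.
    + apply (entry_false (u false) (v j) (w l) (b j) (c l) (d j) (f l) K eta eps delta); auto;
        try split; auto; try lra.
Qed.

Definition sxy (P:tensor) : tensor := fun i j l => P j i l.
Definition sxz (P:tensor) : tensor := fun i j l => P l j i.

Lemma rbmf_sxy r : rbmf r -> rbmf (sxy r).
Proof.
  intros (a1&b1&c1&d1&e1&f1&a2&b2&c2&d2&e2&f2&h1&h2&h3&h4&h5&h6&h7&h8&h9&h10&h11&h12&E).
  exists b1, a1, c1, e1, d1, f1, b2, a2, c2, e2, d2, f2. repeat split; auto.
  subst r. text. unfold sxy, hadamard, tadd, outer3. ring.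
Qed.
Lemma rbmf_sxz r : rbmf r -> rbmf (sxz r).
Proof.
  intros (a1&b1&c1&d1&e1&f1&a2&b2&c2&d2&e2&f2&h1&h2&h3&h4&h5&h6&h7&h8&h9&h10&h11&h12&E).
  exists c1, b1, a1, f1, e1, d1, c2, b2, a2, f2, e2, d2. repeat split; auto.
  subst r. text. unfold sxz, hadamard, tadd, outer3. ring.
Qed.

Lemma approx_any P K delta : tnn P -> (forall i j l, P i j l <= K) -> 1 <= K -> Good P -> 0 < delta ->
  exists r, rbmf r /\ forall i j l, P i j l <= r i j l <= P i j l + delta.
Proof.
  intros Hn HK K1 [G|[G|G]] hd.
  - apply (approx_x P K delta); auto. apply decomp_x; auto.
  - destruct (approx_x (sxy P) K delta) as (r&Hr&B); auto.
    { apply decomp_x; auto. intros i j l; apply Hn. intros i j l; apply HK. }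
    exists (sxy r). split. apply rbmf_sxy; auto. intros i j l. apply (B j i l).
  - destruct (approx_x (sxz P) K delta) as (r&Hr&B); auto.
    { apply decomp_x; auto. intros i j l; apply Hn. intros i j l; apply HK.
      unfold detx, detz, sxz in *. lra. }
    exists (sxz r). split. apply rbmf_sxz; auto. intros i j l. apply (B l j i).
Qed.

Definition tsum (P:tensor) := sumb (fun i => sumb (fun j => sumb (fun k => P i j k))).

Lemma simplex_le1 p : in_simplex p -> forall i j l, 0 <= p i j l <= 1.
Proof.
  intros [Hn Hs] i j l. unfold sumb in Hs. split; auto.
  pose proof (Hn false false false). pose proof (Hn false false true).
  pose proof (Hn false true false). pose proof (Hn false true true).
  pose proof (Hn true false false). pose proof (Hn true false true).
  pose proof (Hn true true false). pose proof (Hn true true true).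
  destruct i, j, l; lra.
Qed.

Lemma finish p r delta : in_simplex p -> rbmf r -> (forall i j l, p i j l <= r i j l <= p i j l + delta) ->
  0 <= delta -> exists q, RBM32 q /\ forall i j l, Rabs (p i j l - q i j l) <= 8*delta.
Proof.
  intros Hp Hr B hd.
  pose proof (simplex_le1 p Hp) as H1.
  destruct Hp as [Hn Hs].
  set (s := tsum r).
  assert (Hs1 : 1 <= s /\ s <= 1 + 8*delta).
  { unfold s, tsum. unfold sumb in *.
    pose proof (B false false false). pose proof (B false false true).
    pose proof (B false true false). pose proof (B false true true).
    pose proof (B true false false). pose proof (B true false true).
    pose proof (B true true false). pose proof (B true true true). lra. }
  assert (spos : 0 < s) by lra.
  exists (fun i j l => r i j l / s). split.
  - split.
    + split.
      * intros i j l. specialize (B i j l). specialize (Hn i j l).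
        unfold Rdiv. apply Rmult_le_pos; [lra|left; apply Rinv_0_lt_compat; lra].
      * unfold sumb. unfold s, tsum, sumb in *. field. lra.
    + destruct Hr as (a1&b1&c1&d1&e1&f1&a2&b2&c2&d2&e2&f2&h1&h2&h3&h4&h5&h6&h7&h8&h9&h10&h11&h12&E).
      exists (fun i => a1 i / s), b1, c1, (fun i => d1 i / s), e1, f1, a2, b2, c2, d2, e2, f2.
      unfold nonneg2 in *.
      repeat split; auto.
      * intro i; unfold Rdiv; apply Rmult_le_pos; [apply h1|left; apply Rinv_0_lt_compat; lra].
      * intro i; unfold Rdiv; apply Rmult_le_pos; [apply h4|left; apply Rinv_0_lt_compat; lra].
      * clearbody s. subst r. text. unfold hadamard, tadd, outer3. field. lra.
  - intros i j l. specialize (B i j l). specialize (H1 i j l).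
    assert (r i j l / s <= r i j l).
    { apply (Rmult_le_reg_r s); [lra|]. field_simplify; [|lra]. nra. }
    assert (p i j l / s <= r i j l / s).
    { unfold Rdiv. apply Rmult_le_compat_r; [left; apply Rinv_0_lt_compat; lra | lra]. }
    assert (p i j l - p i j l / s <= s - 1).
    { apply (Rmult_le_reg_r s); [lra|]. field_simplify; [|lra]. nra. }
    apply Rabs_le. split; lra.
Qed.

Definition pert (eta:R) (a:vec2) : vec2 := fun i => a i + eta * (a false + a true).

Lemma pert_bound a b c eta : nonneg2 a -> nonneg2 b -> nonneg2 c -> 0 < eta <= 1 ->
  forall i j l, 0 <= pert eta a i * pert eta b j * pert eta c l - a i * b j * c l <=
     7*eta*((a false + a true)*(b false + b true)*(c false + c true)).
Proof.
  intros ha hb hc he i j l. unfold pert.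
  set (A := a false + a true). set (B := b false + b true). set (C := c false + c true).
  assert (0 <= a i <= A) by (unfold A; pose proof (ha false); pose proof (ha true); destruct i; lra).
  assert (0 <= b j <= B) by (unfold B; pose proof (hb false); pose proof (hb true); destruct j; lra).
  assert (0 <= c l <= C) by (unfold C; pose proof (hc false); pose proof (hc true); destruct l; lra).
  clearbody A B C.
  set (x := a i) in *. set (y := b j) in *. set (z := c l) in *. clearbody x y z.
  assert (E: (x + eta*A)*(y+eta*B)*(z+eta*C) - x*y*z =
     eta*(A*y*z + x*B*z + x*y*C) + eta*eta*(A*B*z + A*y*C + x*B*C) + eta*eta*eta*(A*B*C)) by ring.
  rewrite E.
  assert (0 <= A*B*C) by (repeat apply Rmult_le_pos; lra).
  assert (0 <= y*z <= B*C) by (split; [apply Rmult_le_pos|apply Rmult_le_compat]; lra).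
  assert (0 <= x*z <= A*C) by (split; [apply Rmult_le_pos|apply Rmult_le_compat]; lra).
  assert (0 <= x*y <= A*B) by (split; [apply Rmult_le_pos|apply Rmult_le_compat]; lra).
  assert (0 <= A*y*z <= A*B*C) by (rewrite !Rmult_assoc; split; [apply Rmult_le_pos|apply Rmult_le_compat_l]; lra).
  assert (0 <= x*B*z <= A*B*C).
  { replace (x*B*z) with (B*(x*z)) by ring. replace (A*B*C) with (B*(A*C)) by ring.
    split; [apply Rmult_le_pos|apply Rmult_le_compat_l]; lra. }
  assert (0 <= x*y*C <= A*B*C) by (split; [apply Rmult_le_pos|apply Rmult_le_compat_r]; lra).
  assert (0 <= A*B*z <= A*B*C) by (split; [apply Rmult_le_pos|apply Rmult_le_compat_l]; try apply Rmult_le_pos; lra).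
  assert (0 <= A*y*C <= A*B*C).
  { replace (A*y*C) with (y*(A*C)) by ring. replace (A*B*C) with (B*(A*C)) by ring.
    assert (0 <= A*C) by (apply Rmult_le_pos; lra).
    split; [apply Rmult_le_pos|apply Rmult_le_compat_r]; lra. }
  assert (0 <= x*B*C <= A*B*C).
  { rewrite !Rmult_assoc. assert (0 <= B*C) by (apply Rmult_le_pos; lra).
    split; [apply Rmult_le_pos|apply Rmult_le_compat_r]; lra. }
  set (M := A*B*C) in *. clearbody M.
  assert (0 <= eta*eta <= eta) by (split; nra).
  assert (0 <= eta*eta*eta <= eta) by (split; nra).
  set (e3 := eta*eta*eta) in *. set (e2 := eta*eta) in *. clearbody e2 e3.
  split.
  - repeat apply Rplus_le_le_0_compat; apply Rmult_le_pos; lra.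
  - assert (eta*(A*y*z + x*B*z + x*y*C) <= eta*(3*M)) by (apply Rmult_le_compat_l; lra).
    assert (e2*(A*B*z + A*y*C + x*B*C) <= eta*(3*M)) by (apply Rmult_le_compat; lra).
    assert (e3*M <= eta*M) by (apply Rmult_le_compat_r; lra).
    lra.
Qed.

Lemma pert_tof a b c eta : nonneg2 a -> nonneg2 b -> nonneg2 c -> 0 < eta ->
  exists k x y z, 0 <= k /\ 0 < x /\ 0 < y /\ 0 < z /\
   forall i j l, pert eta a i * pert eta b j * pert eta c l = k * pw i x * pw j y * pw l z.
Proof.
  intros ha hb hc he.
  pose proof (ha false); pose proof (ha true); pose proof (hb false); pose proof (hb true);
  pose proof (hc false); pose proof (hc true).
  destruct (Rlt_le_dec 0 (a false + a true)) as [A|A];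
  [destruct (Rlt_le_dec 0 (b false + b true)) as [B|B];
  [destruct (Rlt_le_dec 0 (c false + c true)) as [C|C]|]|].
  - assert (forall i, 0 < pert eta a i) by (intro i; unfold pert; destruct i; nra).
    assert (forall i, 0 < pert eta b i) by (intro i; unfold pert; destruct i; nra).
    assert (forall i, 0 < pert eta c i) by (intro i; unfold pert; destruct i; nra).
    exists (pert eta a false * pert eta b false * pert eta c false),
      (pert eta a true / pert eta a false), (pert eta b true / pert eta b false),
      (pert eta c true / pert eta c false).
    repeat split.
    + repeat apply Rmult_le_pos; left; auto.
    + apply Rdiv_lt_0_compat; auto.
    + apply Rdiv_lt_0_compat; auto.
    + apply Rdiv_lt_0_compat; auto.
    + intros i j l.
      assert (pert eta a false <> 0) by (apply not_eq_sym, Rlt_not_eq; auto).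
      assert (pert eta b false <> 0) by (apply not_eq_sym, Rlt_not_eq; auto).
      assert (pert eta c false <> 0) by (apply not_eq_sym, Rlt_not_eq; auto).
      destruct i, j, l; simpl; field; auto.
  - exists 0, 1, 1, 1. repeat split; try lra. intros i j l.
    assert (pert eta c l = 0) by (unfold pert; destruct l; nra). rewrite H5. ring.
  - exists 0, 1, 1, 1. repeat split; try lra. intros i j l.
    assert (pert eta b j = 0) by (unfold pert; destruct j; nra). rewrite H5. ring.
  - exists 0, 1, 1, 1. repeat split; try lra. intros i j l.
    assert (pert eta a i = 0) by (unfold pert; destruct i; nra). rewrite H5. ring.
Qed.

Theorem mainTheorem5 : forall p : tensor, M33 p -> in_closure RBM32 p.
Proof.
  intros p [Hp (a1&b1&c1&a2&b2&c2&a3&b3&c3&ha1&hb1&hc1&ha2&hb2&hc2&ha3&hb3&hc3&Ep)].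
  unfold in_closure. intros eps Heps.
  set (eta := Rmin (1/100) (eps/200)).
  assert (he : 0 < eta) by (unfold eta; apply Rmin_pos; lra).
  assert (he1 : eta <= 1/100) by (unfold eta; apply Rmin_l).
  assert (he2 : eta <= eps/200) by (unfold eta; apply Rmin_r).
  clearbody eta.
  set (p' := tadd (tadd (outer3 (pert eta a1) (pert eta b1) (pert eta c1))
                        (outer3 (pert eta a2) (pert eta b2) (pert eta c2)))
                  (outer3 (pert eta a3) (pert eta b3) (pert eta c3))).
  set (S1 := (a1 false + a1 true)*(b1 false + b1 true)*(c1 false + c1 true)).
  set (S2 := (a2 false + a2 true)*(b2 false + b2 true)*(c2 false + c2 true)).
  set (S3 := (a3 false + a3 true)*(b3 false + b3 true)*(c3 false + c3 true)).
  assert (HS : S1 + S2 + S3 = 1).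
  { destruct Hp as [_ Hs]. rewrite <- Hs. subst p. unfold S1, S2, S3, sumb, tadd, outer3. ring. }
  assert (hS1 : 0 <= S1) by (unfold S1; unfold nonneg2 in *;
     pose proof (ha1 false); pose proof (ha1 true); pose proof (hb1 false); pose proof (hb1 true);
     pose proof (hc1 false); pose proof (hc1 true); repeat apply Rmult_le_pos; lra).
  assert (hS2 : 0 <= S2) by (unfold S2; unfold nonneg2 in *;
     pose proof (ha2 false); pose proof (ha2 true); pose proof (hb2 false); pose proof (hb2 true);
     pose proof (hc2 false); pose proof (hc2 true); repeat apply Rmult_le_pos; lra).
  assert (hS3 : 0 <= S3) by (unfold S3; unfold nonneg2 in *;
     pose proof (ha3 false); pose proof (ha3 true); pose proof (hb3 false); pose proof (hb3 true);
     pose proof (hc3 false); pose proof (hc3 true); repeat apply Rmult_le_pos; lra).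
  assert (Hpp : forall i j l, p i j l <= p' i j l <= p i j l + 7*eta).
  { intros i j l.
    pose proof (pert_bound a1 b1 c1 eta ha1 hb1 hc1 ltac:(lra) i j l) as P1. fold S1 in P1.
    pose proof (pert_bound a2 b2 c2 eta ha2 hb2 hc2 ltac:(lra) i j l) as P2. fold S2 in P2.
    pose proof (pert_bound a3 b3 c3 eta ha3 hb3 hc3 ltac:(lra) i j l) as P3. fold S3 in P3.
    subst p p'. unfold tadd, outer3.
    assert (7*eta*S1 + 7*eta*S2 + 7*eta*S3 = 7*eta) by (transitivity (7*eta*(S1+S2+S3)); [ring | rewrite HS; ring]).
    lra. }
  pose proof (simplex_le1 p Hp) as H1.
  assert (Gp : Good p').
  { destruct (pert_tof a1 b1 c1 eta ha1 hb1 hc1 he) as (k1&x1&y1&z1&hk1&hx1&hy1&hz1&E1).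
    destruct (pert_tof a2 b2 c2 eta ha2 hb2 hc2 he) as (k2&x2&y2&z2&hk2&hx2&hy2&hz2&E2).
    destruct (pert_tof a3 b3 c3 eta ha3 hb3 hc3 he) as (k3&x3&y3&z3&hk3&hx3&hy3&hz3&E3).
    replace p' with (tof k1 x1 y1 z1 k2 x2 y2 z2 k3 x3 y3 z3).
    - apply good_all. repeat split; auto.
    - subst p'. text. unfold tof, tadd, outer3. rewrite E1, E2, E3. reflexivity. }
  destruct (approx_any p' 2 eta) as (r&Hr&Br); auto; try lra.
  { intros i j l. specialize (Hpp i j l). specialize (H1 i j l). lra. }
  { intros i j l. specialize (Hpp i j l). specialize (H1 i j l). lra. }
  destruct (finish p r (8*eta)) as (q&Hq&Bq); auto; try lra.
  { intros i j l. specialize (Hpp i j l). specialize (Br i j l). lra. }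
  exists q. split; auto. intros i j l. specialize (Bq i j l). lra.
Qed.
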